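(* Let $V=V_{\bar0}\oplus V_{\bar1}$ be an $\mathcal{L}$-module which is free of rank $2$ as a $\mathbb{C}[L_{0,0}]$-module, with homogeneous basis elements $1_{\bar0}\in V_{\bar0}$ and $1_{\bar1}\in V_{\bar1}$; write $f(t)1_{\bar0}:=f(L_{0,0})1_{\bar0}$ and $g(x)1_{\bar1}:=g(L_{0,0})1_{\bar1}$ for polynomials $f,g$. Suppose $\lambda\in\mathbb{C}^*$ and $a,b\in\mathbb{C}$ are such that for all $f\in\mathbb{C}[t]$, $g\in\mathbb{C}[x]$, $m\in\mathbb{Z}$, $i\in\mathbb{Z}_+$: $L_{m,i}f(t)1_{\bar0}=\lambda^m(\delta_{i,0}(t-mqa)+\delta_{q,-1}\delta_{i,1}b)f(t-mq)1_{\bar0}$, $L_{m,i}g(x)1_{\bar1}=\lambda^m(\delta_{i,0}(x-mq(a+\frac12))+\delta_{q,-1}\delta_{i,1}b)g(x-mq)1_{\bar1}$, and moreover $G_{\frac12,0}1_{\bar0}=1_{\bar1}$, $G_{\frac12,1}1_{\bar0}=0$, $G_{\frac12,0}1_{\bar1}=q\lambda(t-qa)1_{\bar0}$, $G_{\frac12,1}1_{\bar1}=2q\lambda\delta_{q,-1}b1_{\bar0}$. Then for all $m\in\frac12+\mathbb{Z}$ and $i\in\mathbb{Z}_+$: $$G_{m,i}1_{\bar0}=\lambda^{m-\frac12}\delta_{i,0}1_{\bar1},\qquad G_{m,i}1_{\bar1}=q\lambda^{m+\frac12}\big(\delta_{i,0}(t-2mqa)+2\delta_{q,-1}\delta_{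i,1}b\big)1_{\bar0}.$$
   Context: Fix $q\in\mathbb{C}^*$; $\mathbb{Z}_+=\{0,1,2,\dots\}$; $\delta$ is the Kronecker delta. The Neveu-Schwarz-Block algebra $\mathcal{L}$ is the Lie superalgebra over $\mathbb{C}$ with even basis $\{L_{m,i}\mid m\in\mathbb{Z},i\in\mathbb{Z}_+\}$, odd basis $\{G_{l,j}\mid l\in\frac12+\mathbb{Z},j\in\mathbb{Z}_+\}$ and brackets $[L_{m,i},L_{n,j}]=(n(i+q)-m(j+q))L_{m+n,i+j}$, $[L_{m,i},G_{l,j}]=(l(i+q)-m(j+\frac{q}{2}))G_{m+l,i+j}$, $[G_{l,i},G_{r,j}]=2qL_{l+r,i+j}$. Modules are supermodules. $L_{0,0}$ acts on $V_{\bar0}=\mathbb{C}[L_{0,0}]1_{\bar0}\cong\mathbb{C}[t]$ as multiplication by $t$ and on $V_{\bar1}=\mathbb{C}[L_{0,0}]1_{\bar1}\cong\mathbb{C}[x]$ as multiplication by $x$. *)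

(* Defs.v *)
From mathcomp Require Import all_boot all_order all_algebra.
Set Implicit Arguments. Unset Strict Implicit. Unset Printing Implicit Defensive.
Import Order.TTheory GRing.Theory Num.Theory.
Local Open Scope ring_scope.

(* Complex numbers are modelled by an arbitrary numClosedFieldType C
   (algebraically closed, characteristic 0; includes C = complex numbers).

   The module V, free of rank 2 over C[L_{0,0}] with homogeneous basis
   1_0 in V_0 and 1_1 in V_1, is modelled concretely as
      V := {poly C} * {poly C},   (f, g)  <->  f(t) 1_0 + g(x) 1_1,
   so that V_0 = {poly C} * 0 and V_1 = 0 * {poly C}.

   Indexing: Lact m i  = action of L_{m,i}   (m : int, i : nat),
             Gact k j  = action of G_{k+1/2, j} (k : int, j : nat). *)

Definition Vsp (C : numClosedFieldType) := ({poly C} * {poly C})%type.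

Definition kron (C : numClosedFieldType) (b : bool) : C := (b%:R : C).

Definition halfz (C : numClosedFieldType) (k : int) : C := k%:~R + 2^-1.

Definition NSB_supermodule (C : numClosedFieldType) (q : C)
    (Lact : int -> nat -> Vsp C -> Vsp C)
    (Gact : int -> nat -> Vsp C -> Vsp C) : Prop :=
  (forall m i (c : C) (u v : Vsp C), Lact m i (c *: u + v) = c *: Lact m i u + Lact m i v) /\
  (forall k j (c : C) (u v : Vsp C), Gact k j (c *: u + v) = c *: Gact k j u + Gact k j v) /\
  (* parity: L even, G odd *)
  (forall m i (f : {poly C}), (Lact m i (f, 0)).2 = 0) /\
  (forall m i (g : {poly C}), (Lact m i (0, g)).1 = 0) /\
  (forall k j (f : {poly C}), (Gact k j (f, 0)).1 = 0) /\
  (forall k j (g : {poly C}), (Gact k j (0, g)).2 = 0) /\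
  (forall (m n : int) (i j : nat) (v : Vsp C),
     Lact m i (Lact n j v) - Lact n j (Lact m i v)
     = (n%:~R * (i%:R + q) - m%:~R * (j%:R + q)) *: Lact (m + n) (i + j)%N v) /\
  (forall (m k : int) (i j : nat) (v : Vsp C),
     Lact m i (Gact k j v) - Gact k j (Lact m i v)
     = (halfz C k * (i%:R + q) - m%:~R * (j%:R + q / 2%:R)) *: Gact (m + k) (i + j)%N v) /\
  (* [G_{l,i}, G_{r,j}] = 2q L_{l+r,i+j}, l = k1+1/2, r = k2+1/2, l+r = k1+k2+1 *)
  (forall (k1 k2 : int) (i j : nat) (v : Vsp C),
     Gact k1 i (Gact k2 j v) + Gact k2 j (Gact k1 i v)
     = (2%:R * q) *: Lact (k1 + k2 + 1) (i + j)%N v).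

(* Main.v *)
Require Import Defs.
From mathcomp Require Import all_boot all_order all_algebra ring zify.
Import Order.TTheory GRing.Theory Num.Theory.
Local Open Scope ring_scope.

Lemma pairD (C : numClosedFieldType) (f g f' g' : {poly C}) :
  ((f, g) + (f', g') : Vsp C) = (f + f', g + g').
Proof. by []. Qed.
Lemma pairZ (C : numClosedFieldType) (c : C) (f g : {poly C}) :
  (c *: (f, g) : Vsp C) = (c *: f, c *: g).
Proof. by []. Qed.
Lemma pairN (C : numClosedFieldType) (f g : {poly C}) :
  (- (f, g) : Vsp C) = (- f, - g).
Proof. by []. Qed.

Theorem lemma5p2 (C : numClosedFieldType) (q : C) (hq : q != 0)
    (Lact : int -> nat -> Vsp C -> Vsp C) (Gact : int -> nat -> Vsp C -> Vsp C)
    (hmod : NSB_supermodule q Lact Gact)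
    (lam a b : C) (hlam : lam != 0) :
  (forall (f : {poly C}) (m : int) (i : nat),
     Lact m i (f, 0) =
     (lam ^ m *: ((kron C (i == 0%N) *: ('X - (m%:~R * q * a)%:P)
                   + (kron C (q == -1) * kron C (i == 1%N) * b)%:P)
                  * (f \Po ('X - (m%:~R * q)%:P))), 0)) ->
  (forall (g : {poly C}) (m : int) (i : nat),
     Lact m i (0, g) =
     (0, lam ^ m *: ((kron C (i == 0%N) *: ('X - (m%:~R * q * (a + 2^-1))%:P)
                      + (kron C (q == -1) * kron C (i == 1%N) * b)%:P)
                     * (g \Po ('X - (m%:~R * q)%:P))))) ->
  Gact 0 0 (1, 0) = (0, 1) ->
  Gact 0 1 (1, 0) = 0 ->
  Gact 0 0 (0, 1) = ((q * lam) *: ('X - (q * a)%:P), 0) ->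
  Gact 0 1 (0, 1) = ((2%:R * q * lam * kron C (q == -1) * b)%:P, 0) ->
  forall (k : int) (i : nat),
    Gact k i (1, 0) = (0, (lam ^ k * kron C (i == 0%N))%:P) /\
    Gact k i (0, 1) =
      ((q * lam ^ (k + 1)) *:
         (kron C (i == 0%N) *: ('X - (2%:R * halfz C k * q * a)%:P)
          + (2%:R * kron C (q == -1) * kron C (i == 1%N) * b)%:P), 0).
Proof.
move=> HL0 HL1 G00a G01a G00b G01b.
case: hmod => linL [linG [parL0 [parL1 [parG0 [parG1 [LL [LG GG]]]]]]].
have G0 : forall k j, Gact k j 0 = 0.
  move=> k j; have := linG k j 1 0 0; rewrite !scale1r addr0.
  by move/esym/eqP; rewrite -subr_eq0 addrK => /eqP.
have GD : forall k j u v, Gact k j (u + v) = Gact k j u + Gact k j v.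
  by move=> k j u v; rewrite -{1}(scale1r u) linG scale1r.
have GZ : forall k j c u, Gact k j (c *: u) = c *: Gact k j u.
  by move=> k j c u; rewrite -(addr0 (c *: u)) linG G0 addr0.
set A := fun k j => (Gact k j (1, 0)).2.
have GA : forall k j, Gact k j (1, 0) = (0, A k j).
  by move=> k j; rewrite [LHS]surjective_pairing parG0.
have L00a : forall f, Lact 0 0 (f, 0) = ('X * f, 0).
  move=> f; rewrite HL0 /kron /= !mulr0n !mulr0 !mul0r subr0 comp_polyXr expr0z scale1r addr0 scale1r //.
have L00b : forall f, Lact 0 0 (0, f) = (0, 'X * f).
  move=> f; rewrite HL1 /kron /= !mulr0n !mulr0 !mul0r subr0 comp_polyXr expr0z scale1r addr0 scale1r //.
have shift : forall k j f, Gact k j (f, 0) = (0, (f \Po ('X - (halfz C k * q)%:P)) * A k j).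
  move=> k j; elim/poly_ind => [|p c IH].
    by rewrite comp_poly0 mul0r; apply: G0.
  have -> : ((p * 'X + c%:P, 0) : Vsp C) = ('X * p, 0) + c *: (1, 0).
    rewrite pairZ pairD.
    by rewrite -mul_polyC mulr1 scaler0 addr0 mulrC.
  rewrite GD GZ GA.
  have := LG 0 k 0%N j (p, 0).
  rewrite add0r add0n L00a IH L00b mul0r subr0 add0r.
  set W := (p \Po _) * A k j => E.
  have -> : Gact k j ('X * p, 0) = (0, 'X * W) - (halfz C k * q) *: (0, W).
    by rewrite IH -/W in E; rewrite -E opprB addrC subrK.
  rewrite !pairZ pairN pairD.
  rewrite comp_polyD comp_polyM comp_polyX comp_polyC /W !scaler0 !subr0 addr0.
  congr pair => /=; rewrite -?mul_polyC; ring.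
have C1 : forall r : {poly C}, 1 \Po r = 1 by move=> r; rewrite -polyC1 comp_polyC.
have key : forall (m k : int) (i j : nat) (al : C), A k j = al%:P ->
  (halfz C k * (i%:R + q) - m%:~R * (j%:R + q / 2%:R)) *: A (m + k) (i + j)%N
  = (lam ^ m * al * kron C (i == 0%N) * (halfz C k * q - m%:~R * q * 2^-1))%:P.
  move=> m k i j al hA.
  have E := LG m k i j (1, 0).
  rewrite GA hA HL1 HL0 shift GA in E.
  move/(congr1 snd): E; rewrite /= => <-.
  rewrite hA ?(comp_polyC, C1, mulr1, comp_polyZ, comp_polyB, comp_polyD, comp_polyX).
  rewrite -!mul_polyC /halfz; ring.
have cancel : forall (c : C) (X Y : {poly C}), c != 0 -> c *: X = c *: Y -> X = Y.
  by move=> c X Y /scalerI; apply.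
have h0 : (2^-1 : C) != 0 by rewrite invr_eq0 pnatr_eq0.
have hint : forall n : int, (2^-1 : C) + n%:~R != 0.
  move=> n; apply/negP => /eqP H.
  have : ((1 + 2 * n)%:~R : C) = 0.
    rewrite intrD intrM -[RHS](mulr0 2%:R) -H mulrDr divff ?pnatr_eq0 //.
  move/eqP; rewrite intr_eq0 => /eqP; lia.
have A00 : A 0 0%N = 1%:P by rewrite /A G00a polyC1.
have A01 : A 0 1%N = 0%:P by rewrite /A G01a polyC0.
have k0 : kron C true = 1 by rewrite /kron.
have k1 : kron C false = 0 by rewrite /kron.
have An0 : forall n : int, n != 1 -> A n 0%N = (lam ^ n)%:P.
  move=> n hn; have := key n 0 0%N 0%N 1 A00.
  rewrite addr0 addn0 eqxx k0 /halfz => E.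
  apply: (cancel (2^-1 * q * (1 - n%:~R))).
    have -> : (1 - n%:~R : C) = (1 - n)%:~R by rewrite intrB.
    by rewrite !mulf_neq0 // intr_eq0 subr_eq0 eq_sym.
  move: E; set c := (X in X *: A _ _ = _) => E.
  have cE : c = 2^-1 * q * (1 - n%:~R) by rewrite /c; ring.
  by rewrite -cE E -mul_polyC -polyCM; congr (_%:P); rewrite cE; ring.
have A10 : A 1 0%N = lam%:P.
  have := key 2 (-1) 0%N 0%N (lam ^ (-1)) (An0 (-1) isT).
  have -> : (2 + -1 : int) = 1 by [].
  rewrite addn0 eqxx k0 /halfz => E.
  move: E; set c := (X in X *: A _ _ = _) => E.
  have cE : c = - q * (2^-1 + 1%:~R) by rewrite /c; ring.
  apply: (cancel c); first by rewrite cE mulf_neq0 ?oppr_eq0 ?hint.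
  rewrite E -mul_polyC -polyCM; congr (_%:P).
  have -> : lam ^ 2 * lam ^ (-1) = lam.
    by rewrite -exprzDr ?unitfE.
  rewrite /c; ring.
have AS : forall (n : int) (i : nat), A n i.+1 = 0.
  move=> n i.
  have := key n 0 i.+1 0%N 1 A00; rewrite addr0 addn0 k1 mulr0 mul0r polyC0 => E1.
  have := key n 0 i 1%N 0 A01; rewrite addr0 addn1 mulr0 !mul0r polyC0 => E2.
  move: E1; set c1 := (X in X *: A _ _ = _) => E1.
  move: E2; set c2 := (X in X *: A _ _ = _) => E2.
  have cE : c1 - c2 = 2^-1 + n%:~R by rewrite /c1 /c2 /halfz; ring.
  have [c10|c1n0] := eqVneq c1 0.
    apply: (cancel c2); last by rewrite E2 scaler0.
    by apply: contraNneq (hint n) => c20; rewrite -cE c10 c20 subrr.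
  by apply: (cancel c1); rewrite // E1 scaler0.
have Aval : forall (n : int) (i : nat), A n i = (lam ^ n * kron C (i == 0%N))%:P.
  move=> n [|i]; last by rewrite AS k1 mulr0 polyC0.
  rewrite eqxx k0 mulr1; have [->|hn] := eqVneq n 1; first by rewrite A10 expr1z.
  exact: An0.
move=> k i.
have P1 : Gact k i (1, 0) = (0, (lam ^ k * kron C (i == 0%N))%:P) by rewrite GA Aval.
split => //.
have E := GG k 0 i 0%N (1, 0).
have cP : forall c : C, ((0, c%:P) : Vsp C) = c *: (0, 1).
  by move=> c; rewrite pairZ scaler0 -mul_polyC mulr1.
rewrite G00a P1 (cP (lam ^ k * kron C (i == 0%N))) GZ G00b addr0 addn0 HL0 in E.
have -> : Gact k i (0, 1) = (2%:R * q) *: 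
   (lam ^ (k + 1) *: ((kron C (i == 0%N) *: ('X - ((k + 1)%:~R * q * a)%:P) +
     (kron C (q == -1) * kron C (i == 1%N) * b)%:P) * (1 \Po ('X - ((k + 1)%:~R * q)%:P))), 0)
   - (lam ^ k * kron C (i == 0%N)) *: ((q * lam) *: ('X - (q * a)%:P), 0).
  by rewrite -E addrK.
rewrite !pairZ pairN pairD !scaler0 subr0 C1 mulr1.
congr pair.
have h2 : 2%:R * halfz C k = 2%:R * k%:~R + 1.
  by rewrite /halfz mulrDr divff // pnatr_eq0.
rewrite h2 !exprzDr ?unitfE // expr1z intrD -!mul_polyC; ring.
Qed.
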